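(* Let $K$ be an algebraically closed field of characteristic $2$, and $X=\{F=0\}\subset\mathbb{P}^3_K$ with $F=a_1\sigma_1^4+a_2\sigma_1^2\sigma_2+a_3\sigma_1\sigma_3+a_4\sigma_4+\beta\sigma_2^2$. For a point $x$ put $$f(w)=w^3(a_3\sigma_1)+w^2(a_2+a_3)\sigma_1^2+w\big(a_2\sigma_1^3+a_3(\sigma_3+\sigma_1\sigma_2)\big)+a_4\sigma_4,$$ with the $\sigma_i$ evaluated at $x$; then $x_iF_i(x)=f(x_i)$ for each $i$, so each coordinate of a singular point is a root of $f$. (I) If $a_3=a_4=0$, then $\mathrm{Sing}(X)$ is infinite, since it contains $\{\sigma_1=\sigma_2=0\}$. (II) Assume $X$ normal. If a singular point of $X$ has a coordinate equal to zero and satisfies $\sigma_1=0$, then it has two coordinates equal to zero. (III) Assume $X$ normal. For a singular point $x$, $f$ is not identically zero, unless: $a_4=0$ and $x=(1,1,1,1)$; or $\beta=0$ and $x$ is in the $\mathfrak{S}_4$-orbit of $(0,0,1,1)$; or $a_2=a_3=0$ and $x$ has two coordinates equal to zero. In particular no singular point of $X$ has four pairwise distinct coordinates. (IV) If a singular point $x$ of $X$ has $x_1=x_2=0$, then $a_2\sigma_1^3+a_3(\sigma_3+\sigma_1\sigma_2)=0$ at $x$; and, given this equation, for $i=3,4$ one has $F_i(x)=0\iff \sigma_1x_i\big((a_2+a_3)\sigma_1+a_3x_i\big)=0$. Consequently such a singular point is, up to permutation, either (i) $(0,0,1,1)$; or (ii) $(0,0,0,1)$, and then $a_2=0$ (and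 $a_1=0$); or (iii) a point $(0,0,x_3,x_4)$ with $x_3,x_4\neq0$ and $\sigma_1\neq0$, and then $a_2=a_3=0$ and $a_1(x_3+x_4)^4+\beta(x_3x_4)^2=0$. *)

(* Defs.v *)
From HB Require Import structures.
From mathcomp Require Import all_boot all_order all_algebra all_fingroup.
From mathcomp Require Import mpoly.
Set Implicit Arguments. Unset Strict Implicit. Unset Printing Implicit Defensive.
Import Order.TTheory GRing.Theory Num.Theory.
Local Open Scope ring_scope.

Section Quartic.
Variables (K : closedFieldType) (a1 a2 a3 a4 b : K).

Definition sig (k : nat) : {mpoly K[4]} := mesym 4 K k.

Definition Fq : {mpoly K[4]} :=
  a1 *: sig 1 ^+ 4 + a2 *: (sig 1 ^+ 2 * sig 2) + a3 *: (sig 1 * sig 3)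
  + a4 *: sig 4 + b *: sig 2 ^+ 2.

Definition sv (k : nat) (x : 'I_4 -> K) : K := (sig k).@[x].

Definition Fi (i : 'I_4) (x : 'I_4 -> K) : K := (Fq^`M(i)).@[x].

(* x (a nonzero vector of K^4, representing a point of P^3) is a singular
   point of X = {F = 0} *)
Definition sing_pt (x : 'I_4 -> K) : Prop :=
  (exists i, x i != 0) /\ Fq.@[x] = 0 /\ forall i, Fi i x = 0.

Definition sing_finite : Prop :=
  exists (m : nat) (p : 'I_m -> 'I_4 -> K),
    forall x, sing_pt x -> exists j c, c != 0 /\ forall i, x i = c * p j i.

(* X normal: for a hypersurface in P^3 (Serre's criterion: S2 automatic,
   R1 <=> singular locus of codimension >= 2), i.e. Sing(X) finite. *)
Definition X_normal : Prop := sing_finite.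

Definition c1 (x : 'I_4 -> K) : K :=
  a2 * sv 1 x ^+ 3 + a3 * (sv 3 x + sv 1 x * sv 2 x).

Definition fpol (x : 'I_4 -> K) : {poly K} :=
  (a3 * sv 1 x) *: 'X^3 + ((a2 + a3) * sv 1 x ^+ 2) *: 'X^2
  + c1 x *: 'X + (a4 * sv 4 x)%:P.

End Quartic.

Definition proj_eq (K : fieldType) (x y : 'I_4 -> K) : Prop :=
  exists c : K, c != 0 /\ forall i, x i = c * y i.

Definition pt1111 (K : fieldType) : 'I_4 -> K := fun _ => 1.
Definition pt0011 (K : fieldType) : 'I_4 -> K :=
  fun i => if (i < 2)%N then 0 else 1.

Definition in_orbit_0011 (K : fieldType) (x : 'I_4 -> K) : Prop :=
  exists s : 'S_4, proj_eq x (fun i => pt0011 K (s i)).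

Definition two_zero (K : fieldType) (x : 'I_4 -> K) : Prop :=
  exists i j : 'I_4, i != j /\ x i = 0 /\ x j = 0.

(* Main.v *)
Require Import Defs.
From HB Require Import structures.
From mathcomp Require Import all_boot all_order all_algebra all_fingroup.
From mathcomp Require Import mpoly.
From mathcomp Require Import ring.
Import Order.TTheory GRing.Theory Num.Theory.
Local Open Scope ring_scope.
Section S.
Variable K : closedFieldType.
Notation i0 := (@Ordinal 4 0 isT).
Notation i1 := (@Ordinal 4 1 isT).
Notation i2 := (@Ordinal 4 2 isT).
Notation i3 := (@Ordinal 4 3 isT).
Lemma widen_inord n m (h : (n <= m.+1)%N) (o : 'I_n) : widen_ord h o = inord o.
Proof. by apply/val_inj; rewrite /= inordK // (leq_trans (ltn_ord o)). Qed.
Lemma ordmax_inord n : (ord_max : 'I_n.+1) = inord n.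
Proof. by apply/val_inj; rewrite /= inordK. Qed.
Lemma inord0 : (inord 0 : 'I_4) = i0. Proof. by apply/val_inj; rewrite /= inordK. Qed.
Lemma inord1 : (inord 1 : 'I_4) = i1. Proof. by apply/val_inj; rewrite /= inordK. Qed.
Lemma inord2 : (inord 2 : 'I_4) = i2. Proof. by apply/val_inj; rewrite /= inordK. Qed.
Lemma inord3 : (inord 3 : 'I_4) = i3. Proof. by apply/val_inj; rewrite /= inordK. Qed.
Notation X0 := ('X_i0 : {mpoly K[4]}).
Notation X1 := ('X_i1 : {mpoly K[4]}).
Notation X2 := ('X_i2 : {mpoly K[4]}).
Notation X3 := ('X_i3 : {mpoly K[4]}).
Lemma lift_inord n (i : 'I_n.+1) (j : 'I_n) : lift i j = inord (bump i j).
Proof. by apply/val_inj; rewrite /= inordK //; exact: (ltn_ord (lift i j)). Qed.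
Lemma ord0_i0 : (ord0 : 'I_4) = i0. Proof. by apply/val_inj. Qed.
Ltac normX := rewrite ?(widen_inord, ordmax_inord, lift_inord) /= ?inordK //
   ?(ord0_i0, inord0, inord1, inord2, inord3).

Lemma sig1E : sig K 1 = X0 + X1 + X2 + X3.
Proof. rewrite /sig mesym1E !big_ord_recl !big_ord0 /=. normX. ring. Qed.
Lemma sig2E : sig K 2 = X0*X1 + X0*X2 + X0*X3 + X1*X2 + X1*X3 + X2*X3.
Proof.
rewrite /sig (mesymSS _ 3 1) (mesymSS _ 2 1) !mesym1E mesymnnE.
rewrite !big_ord_recl !big_ord0 /=.
rewrite !(mwidenD, mwidenM, mwidenX, mnmwiden1, mwiden1, mwiden0) /=.
normX. ring.
Qed.
Lemma sig3E : sig K 3 = X0*X1*X2 + X0*X1*X3 + X0*X2*X3 + X1*X2*X3.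
Proof.
rewrite /sig (mesymSS _ 3 2) (mesymSS _ 2 1) !mesym1E !mesymnnE.
rewrite !big_ord_recl !big_ord0 /=.
rewrite !(mwidenD, mwidenM, mwidenX, mnmwiden1, mwiden1, mwiden0) /=.
normX. ring.
Qed.
Lemma sig4E : sig K 4 = X0*X1*X2*X3.
Proof.
rewrite /sig mesymnnE !big_ord_recl !big_ord0 /=. normX. ring.
Qed.
Lemma mderivXU (i j : 'I_4) : ('X_i : {mpoly K[4]})^`M(j) = (i == j)%:R.
Proof.
rewrite mderivX mnm1E; case: eqP => [->|_]; last by rewrite scale0r.
have -> : (U_(j) - U_(j) = 0)%MM by apply/mnmP => k; rewrite mnmBE mnm0E subnn.
by rewrite mpolyX0 scale1r.
Qed.

Lemma ord4_cases (i : 'I_4) : i = i0 \/ i = i1 \/ i = i2 \/ i = i3.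
Proof.
case: i => [[|[|[|[|k]]]] Hk]; last by [].
- by left; apply/val_inj.
- by right; left; apply/val_inj.
- by right; right; left; apply/val_inj.
- by right; right; right; apply/val_inj.
Qed.
Ltac dcase i := case: (ord4_cases i) => [->|[->|[->|->]]].
Lemma dsig1 i : (sig K 1)^`M(i) = 1.
Proof. dcase i; rewrite sig1E !mderivD !mderivXU /=; ring. Qed.
Lemma dsig2 i : (sig K 2)^`M(i) = sig K 1 - 'X_i.
Proof. dcase i; rewrite sig1E sig2E !mderivD !mderivM !mderivXU /=; ring. Qed.
Lemma dsig3 i : (sig K 3)^`M(i) = sig K 2 - 'X_i * sig K 1 + 'X_i ^+ 2.
Proof. dcase i; rewrite sig1E sig2E sig3E !mderivD !mderivM !mderivXU /=; ring. Qed.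

Variable hK : (2 \in [pchar K])%N.
Lemma two0 : (2%:R : K) = 0. Proof. exact: pcharf0 hK. Qed.
Lemma char2_eq (u v q : K) : u = v + 2%:R * q -> u = v.
Proof. by rewrite two0 mul0r addr0. Qed.
Lemma oppK2 (u : K) : - u = u.
Proof. by apply/eqP; rewrite -subr_eq0 -opprD -mulr2n -mulr_natr two0 mulr0 oppr0. Qed.

Variables (a1 a2 a3 a4 b : K).
Section X.
Variable x : 'I_4 -> K.
Lemma sv1E : sv 1 x = x i0 + x i1 + x i2 + x i3.
Proof. by rewrite /sv sig1E !(mevalD, mevalM, mevalXU). Qed.
Lemma sv2E : sv 2 x = x i0 * x i1 + x i0 * x i2 + x i0 * x i3 + x i1 * x i2 + x i1 * x i3 + x i2 * x i3.
Proof. by rewrite /sv sig2E !(mevalD, mevalM, mevalXU). Qed.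
Lemma sv3E : sv 3 x = x i0 * x i1 * x i2 + x i0 * x i1 * x i3 + x i0 * x i2 * x i3 + x i1 * x i2 * x i3.
Proof. by rewrite /sv sig3E !(mevalD, mevalM, mevalXU). Qed.
Lemma sv4E : sv 4 x = x i0 * x i1 * x i2 * x i3.
Proof. by rewrite /sv sig4E !(mevalD, mevalM, mevalXU). Qed.
Definition d4 i := ((sig K 4)^`M(i)).@[x].
Lemma d4E0 : d4 i0 = x i1 * x i2 * x i3.
Proof. rewrite /d4 sig4E !mderivM !mderivXU /= !(mevalD, mevalM, mevalXU, meval0, meval1); ring. Qed.
Lemma d4E1 : d4 i1 = x i0 * x i2 * x i3.
Proof. rewrite /d4 sig4E !mderivM !mderivXU /= !(mevalD, mevalM, mevalXU, meval0, meval1); ring. Qed.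
Lemma d4E2 : d4 i2 = x i0 * x i1 * x i3.
Proof. rewrite /d4 sig4E !mderivM !mderivXU /= !(mevalD, mevalM, mevalXU, meval0, meval1); ring. Qed.
Lemma d4E3 : d4 i3 = x i0 * x i1 * x i2.
Proof. rewrite /d4 sig4E !mderivM !mderivXU /= !(mevalD, mevalM, mevalXU, meval0, meval1); ring. Qed.
Lemma xd4 i : x i * d4 i = sv 4 x.
Proof. rewrite sv4E; dcase i; rewrite ?d4E0 ?d4E1 ?d4E2 ?d4E3; ring. Qed.

Lemma FqE : (Fq a1 a2 a3 a4 b).@[x] = a1 * sv 1 x ^+ 4 + a2 * (sv 1 x ^+ 2 * sv 2 x)
  + a3 * (sv 1 x * sv 3 x) + a4 * sv 4 x + b * sv 2 x ^+ 2.
Proof. by rewrite /Fq !(mevalD, mevalZ, mevalM, rmorphXn). Qed.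

Lemma FiE i : Fi a1 a2 a3 a4 b i x = a2 * sv 1 x ^+ 2 * (sv 1 x + x i)
  + a3 * (sv 3 x + sv 1 x * sv 2 x + x i * sv 1 x ^+ 2 + x i ^+ 2 * sv 1 x) + a4 * d4 i.
Proof.
rewrite /Fi /Fq !(exprS, expr0, mulr1) !(mderivD, mderivZ, mderivM) dsig1 dsig2 dsig3.
rewrite /d4 !(mevalD, mevalB, mevalN, mevalZ, mevalM, mevalXU, meval1, rmorphXn) /sv.
set s1 := meval x (sig K 1); set s2 := meval x (sig K 2); set s3 := meval x (sig K 3).
apply: (char2_eq _ _ (2%:R * a1 * s1 ^+ 3 + a2 * s1 * s2 - a2 * s1 ^+ 2 * x i - a3 * s1 ^+ 2 * x i + b * s2 * (s1 - x i))).
ring.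
Qed.
End X.

Notation Sg := (sing_pt a1 a2 a3 a4 b).

Lemma not_finite :
  (forall t : K, exists y, y i0 = t /\ y i2 = 1 /\ Sg y) -> ~ sing_finite a1 a2 a3 a4 b.
Proof.
move=> H [m [p Hp]].
pose c j := p j i0 / p j i2.
pose Q : {poly K} := \prod_(j < m) ('X - (c j)%:P).
have Qm : Q \is monic by apply: monic_prod => j _; exact: monicXsubC.
pose P : {poly K} := Q * 'X + 1.
have sP : size P != 1%N.
  have sQ : (1 <= size Q)%N by rewrite lt0n size_poly_eq0 monic_neq0.
  have sQX : size (Q * 'X) = (size Q).+1 by rewrite size_mulX ?monic_neq0.
  rewrite /P size_addl sQX ?size_poly1 ?ltnS //.
  by rewrite eqSS -lt0n.
have [t rt] := closed_rootP P sP.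
have Qt : forall j, t != c j.
  move=> j; apply/eqP => etj; move: rt; rewrite /root /P hornerD hornerM hornerX hornerC.
  rewrite /Q horner_prod (bigD1 j) //= hornerXsubC etj subrr !mul0r add0r.
  by rewrite oner_eq0.
have [y [y0 [y2 Sy]]] := H t.
have [j [cc [ccnz hy]]] := Hp y Sy.
have e2 : p j i2 = cc^-1 by rewrite -(mulKf ccnz (p j i2)) -hy y2 mulr1.
have : c j = t by rewrite /c e2 invrK mulrC -hy y0.
by move=> ctj; move: (Qt j); rewrite ctj eqxx.
Qed.

Lemma part0 x i : x i * Fi a1 a2 a3 a4 b i x = (fpol a2 a3 a4 x).[x i].
Proof. rewrite FiE /fpol /c1 !(hornerD, hornerZ, hornerXn, hornerX, hornerC) -(xd4 x i). ring. Qed.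

Lemma partI1 : a3 = 0 -> a4 = 0 -> forall x, (exists i, x i != 0) ->
  sv 1 x = 0 -> sv 2 x = 0 -> Sg x.
Proof.
move=> h3 h4 x nz h1 h2; split=> //; split.
  by rewrite FqE h1 h2 h3 h4; ring.
by move=> i; rewrite FiE h1 h3 h4; ring.
Qed.

Lemma partI2 : a3 = 0 -> a4 = 0 -> ~ sing_finite a1 a2 a3 a4 b.
Proof.
move=> h3 h4; apply: not_finite => t.
have [bb hb] := @solve_monicpoly K 2
  (fun k => if k == 0%N then -(t^+2 + t + 1) else -(t + 1)) isT.
move: hb; rewrite !big_ord_recl big_ord0 /= => hb.
exists (fun i => if i == i0 then t else if i == i1 then bb else if i == i2 then 1 else -(t + bb + 1)).
split; first by []. split; first by [].
apply: partI1 => //.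
- by exists i2; rewrite /= oner_eq0.
- rewrite sv1E /=; ring.
- rewrite sv2E /=.
  apply: (@eq_trans _ _ (-(bb^+2 - (-(t^+2+t+1) * bb ^+ 0 + (-(t+1) * bb ^+ 1 + 0))))); first ring.
  by rewrite hb subrr oppr0.
Qed.

Lemma d4_zero x i j : x i = 0 -> j != i -> d4 x j = 0.
Proof.
dcase i; dcase j => h hj //; rewrite ?(d4E0, d4E1, d4E2, d4E3) h; ring.
Qed.
Lemma d4_self x i : x i = 0 -> d4 x i = sv 3 x.
Proof. dcase i => h; rewrite ?(d4E0, d4E1, d4E2, d4E3) sv3E h; ring. Qed.
Lemma d4_eq0 x i : d4 x i = 0 -> exists k, k != i /\ x k = 0.
Proof.
dcase i; rewrite ?(d4E0, d4E1, d4E2, d4E3) => /eqP; rewrite !mulf_eq0 -!orbA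
  => /or3P [] /eqP h; by [exists i0|exists i1|exists i2|exists i3].
Qed.
Lemma Fi_s10 x i : sv 1 x = 0 -> Fi a1 a2 a3 a4 b i x = a3 * sv 3 x + a4 * d4 x i.
Proof. move=> h; rewrite FiE h; ring. Qed.
Lemma a34 : sing_finite a1 a2 a3 a4 b -> ~ (a3 = 0 /\ a4 = 0).
Proof. by move=> N [h3 h4]; apply: (partI2 h3 h4). Qed.

Lemma partII : X_normal a1 a2 a3 a4 b ->
  forall x, Sg x -> (exists i, x i = 0) -> sv 1 x = 0 -> two_zero x.
Proof.
move=> N x [nz [F0 Fz]] [i hi] h1.
have hj := neq_lift i (ord0 : 'I_3).
have e1 := Fz (lift i ord0); rewrite Fi_s10 // (d4_zero x i _ hi) 1?eq_sym // mulr0 addr0 in e1.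
have e2 := Fz i; rewrite Fi_s10 // (d4_self x i hi) e1 add0r in e2.
have s30 : sv 3 x = 0.
  apply/eqP; apply: contraT => hs; case: (a34 N); split.
    by move/eqP: e1; rewrite mulf_eq0 (negbTE hs) orbF => /eqP.
  by move/eqP: e2; rewrite mulf_eq0 (negbTE hs) orbF => /eqP.
have [k [hk xk]] := d4_eq0 x i (etrans (d4_self x i hi) s30).
by exists k, i.
Qed.
Lemma pat x : sv 1 x = 0 -> (exists i, x i != 0) -> (forall i, d4 x i = 0) ->
  exists k l u, [/\ k != l, u != 0, (forall m, x m = if (m == k) || (m == l) then 0 else u) & sv 2 x = u ^+ 2].
Proof.
move=> h1 [i nz] hd.
have d0 := hd i0; have d1 := hd i1; have d2 := hd i2; have d3 := hd i3.
rewrite d4E0 in d0; rewrite d4E1 in d1; rewrite d4E2 in d2; rewrite d4E3 in d3.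
rewrite sv1E in h1.
case: (eqVneq (x i0) 0) => z0; case: (eqVneq (x i1) 0) => z1;
case: (eqVneq (x i2) 0) => z2; case: (eqVneq (x i3) 0) => z3.
- by move: nz; dcase i; rewrite ?z0 ?z1 ?z2 ?z3 eqxx.
- by rewrite z0 z1 z2 !(add0r, addr0) in h1; rewrite h1 eqxx in z3.
- by rewrite z0 z1 z3 !(add0r, addr0) in h1; rewrite h1 eqxx in z2.
- have e : x i2 = x i3.
    by rewrite z0 z1 !(add0r, addr0) in h1; apply/eqP; rewrite -subr_eq0 oppK2 h1.
  exists i0, i1, (x i2); split => //.
    by move=> m; dcase m; rewrite /= ?z0 ?z1 ?e.
  by rewrite sv2E z0 z1 e; ring.
- by rewrite z0 z2 z3 !(add0r, addr0) in h1; rewrite h1 eqxx in z1.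
- have e : x i1 = x i3.
    by rewrite z0 z2 !(add0r, addr0) in h1; apply/eqP; rewrite -subr_eq0 oppK2 h1.
  exists i0, i2, (x i1); split => //.
    by move=> m; dcase m; rewrite /= ?z0 ?z2 ?e.
  by rewrite sv2E z0 z2 e; ring.
- have e : x i1 = x i2.
    by rewrite z0 z3 !(add0r, addr0) in h1; apply/eqP; rewrite -subr_eq0 oppK2 h1.
  exists i0, i3, (x i1); split => //.
    by move=> m; dcase m; rewrite /= ?z0 ?z3 ?e.
  by rewrite sv2E z0 z3 e; ring.
- by move/eqP: d0; rewrite !mulf_eq0 (negbTE z1) (negbTE z2) (negbTE z3).
- by rewrite z1 z2 z3 !(add0r, addr0) in h1; rewrite h1 eqxx in z0.
- have e : x i0 = x i3.
    by rewrite z1 z2 !(add0r, addr0) in h1; apply/eqP; rewrite -subr_eq0 oppK2 h1.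
  exists i1, i2, (x i0); split => //.
    by move=> m; dcase m; rewrite /= ?z1 ?z2 ?e.
  by rewrite sv2E z1 z2 e; ring.
- have e : x i0 = x i2.
    by rewrite z1 z3 !(add0r, addr0) in h1; apply/eqP; rewrite -subr_eq0 oppK2 h1.
  exists i1, i3, (x i0); split => //.
    by move=> m; dcase m; rewrite /= ?z1 ?z3 ?e.
  by rewrite sv2E z1 z3 e; ring.
- by move/eqP: d1; rewrite !mulf_eq0 (negbTE z0) (negbTE z2) (negbTE z3).
- have e : x i0 = x i1.
    by rewrite z2 z3 !(add0r, addr0) in h1; apply/eqP; rewrite -subr_eq0 oppK2 h1.
  exists i2, i3, (x i0); split => //.
    by move=> m; dcase m; rewrite /= ?z2 ?z3 ?e.
  by rewrite sv2E z2 z3 e; ring.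
- by move/eqP: d2; rewrite !mulf_eq0 (negbTE z0) (negbTE z1) (negbTE z3).
- by move/eqP: d3; rewrite !mulf_eq0 (negbTE z0) (negbTE z1) (negbTE z2).
- by move/eqP: d0; rewrite !mulf_eq0 (negbTE z1) (negbTE z2) (negbTE z3).
Qed.

Lemma pt_ge2 (w : 'I_4) : w != i0 -> w != i1 -> pt0011 K w = 1.
Proof. by dcase w. Qed.

Lemma orbit_gen (x : 'I_4 -> K) (k l : 'I_4) (u : K) : k != l -> u != 0 ->
  (forall m, x m = if (m == k) || (m == l) then 0 else u) -> in_orbit_0011 x.
Proof.
move=> kl u0 hx.
pose t1 := tperm k i0; pose l1 := t1 l.
have l1n : l1 != i0.
  apply/eqP => h; have : t1 l = t1 k by rewrite -/l1 h /t1 tpermL.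
  by move/perm_inj => lk; rewrite lk eqxx in kl.
exists (t1 * tperm l1 i1)%g, u; split=> // m; rewrite hx permM.
case: (eqVneq m k) => [->|mk] /=.
  by rewrite /t1 tpermL tpermD ?mulr0 // eq_sym.
case: (eqVneq m l) => [->|ml] /=.
  by rewrite -/l1 tpermL mulr0.
rewrite pt_ge2 ?mulr1 //.
  apply/eqP => h; have : tperm l1 i1 (t1 m) = tperm l1 i1 (t1 k).
    by rewrite h /t1 tpermL tpermD // eq_sym.
  by move/perm_inj/perm_inj => e; rewrite e eqxx in mk.
apply/eqP => h; have : tperm l1 i1 (t1 m) = tperm l1 i1 (t1 l).
  by rewrite h -/l1 tpermL.
by move/perm_inj/perm_inj => e; rewrite e eqxx in ml.
Qed.

Lemma all_d4_two x : (forall i, d4 x i = 0) -> two_zero x.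
Proof.
move=> hd; have [k [hk xk]] := d4_eq0 x i0 (hd i0).
have [l [hl xl]] := d4_eq0 x k (hd k).
by exists l, k.
Qed.

Lemma fcoef x : fpol a2 a3 a4 x = 0 ->
  [/\ a3 * sv 1 x = 0, (a2 + a3) * sv 1 x ^+ 2 = 0, c1 a2 a3 x = 0 & a4 * sv 4 x = 0].
Proof.
move=> h; have c k := congr1 (fun p : {poly K} => p`_k) h.
have := c 3%N; have := c 2%N; have := c 1%N; have := c 0%N.
rewrite /fpol !coefD !coefZ !coefXn !coefX !coefC ?coef0 /=.
move=> e0 e1 e2 e3; split.
- by move: e3; rewrite !(mulr1, mulr0, addr0, add0r).
- by move: e2; rewrite !(mulr1, mulr0, addr0, add0r).
- by move: e1; rewrite !(mulr1, mulr0, addr0, add0r).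
- by move: e0; rewrite !(mulr1, mulr0, addr0, add0r).
Qed.

Lemma vieta (x : 'I_4 -> K) i : x i ^+ 4 - sv 1 x * x i ^+ 3 + sv 2 x * x i ^+ 2 - sv 3 x * x i + sv 4 x = 0.
Proof. rewrite sv1E sv2E sv3E sv4E; dcase i; ring. Qed.

Lemma frob (u v : K) : (u - v) ^+ 4 = u ^+ 4 - v ^+ 4.
Proof.
apply: (char2_eq _ _ (- 2%:R * u^+3 * v + 3%:R * u^+2 * v^+2 - 2%:R * u * v^+3 + v^+4)); ring.
Qed.

Lemma partIIIa : X_normal a1 a2 a3 a4 b -> forall x, Sg x -> fpol a2 a3 a4 x = 0 ->
  (a4 = 0 /\ proj_eq x (pt1111 K)) \/ (b = 0 /\ in_orbit_0011 x) \/
  (a2 = 0 /\ a3 = 0 /\ two_zero x).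
Proof.
move=> N x [nz [F0 Fz]] /fcoef [e3 e2 e1 e0].
have na := a34 N.
case: (eqVneq (sv 1 x) 0) => h1; last first.
  have ha3 : a3 = 0 by move/eqP: e3; rewrite mulf_eq0 (negbTE h1) orbF => /eqP.
  have ha2 : a2 = 0.
    by move/eqP: e2; rewrite ha3 addr0 mulf_eq0 expf_eq0 (negbTE h1) andbF orbF => /eqP.
  have ha4 : a4 != 0 by apply/eqP => h4; apply: na.
  right; right; split=> //; split=> //; apply: all_d4_two => i.
  by move: (Fz i); rewrite FiE ha2 ha3 !mul0r !add0r => /eqP; rewrite mulf_eq0 (negbTE ha4) => /eqP.
have as3 : a3 * sv 3 x = 0 by rewrite -e1 /c1 h1; ring.
have Fz' i : a4 * d4 x i = 0 by move: (Fz i); rewrite Fi_s10 // as3 add0r.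
case: (eqVneq a4 0) => h4; last first.
  have hd i : d4 x i = 0 by move/eqP: (Fz' i); rewrite mulf_eq0 (negbTE h4) => /eqP.
  have [k [l [u [kl u0 hx s2]]]] := pat x h1 nz hd.
  have s4 : sv 4 x = 0 by rewrite -(xd4 x k) hx eqxx mul0r.
  have hb : b = 0.
    have : b * (u ^+ 2) ^+ 2 = 0 by rewrite -F0 FqE h1 s4 s2; ring.
    by move/eqP; rewrite mulf_eq0 !expf_eq0 (negbTE u0) /= orbF => /eqP.
  by right; left; split=> //; exact: orbit_gen kl u0 hx.
left; split=> //.
have ha3 : a3 != 0 by apply/eqP => h3; apply: na.
have s3 : sv 3 x = 0 by move/eqP: as3; rewrite mulf_eq0 (negbTE ha3) => /eqP.
have Fb : b * sv 2 x ^+ 2 = 0 by rewrite -F0 FqE h1 h4; ring.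
case: (eqVneq b 0) => hb.
  exfalso; apply: (not_finite _ N) => t.
  exists (fun i => if i == i0 then t else if i == i1 then -t else if i == i2 then 1 else -1).
  split; first by []. split; first by [].
  set y := (fun i => _).
  have y1 : sv 1 y = 0 by rewrite sv1E /y /=; ring.
  have y3 : sv 3 y = 0 by rewrite sv3E /y /=; ring.
  split; first by exists i2; rewrite /= oner_eq0.
  split; first by rewrite FqE y1 h4 hb; ring.
  by move=> i; rewrite FiE y1 y3 h4; ring.
have s2 : sv 2 x = 0.
  by move/eqP: Fb; rewrite mulf_eq0 (negbTE hb) expf_eq0 /= => /eqP.
have w j : x j ^+ 4 = - sv 4 x.
  have := vieta x j; rewrite h1 s2 s3 !(mul0r, subr0, addr0) => /eqP.
  by rewrite addr_eq0 => /eqP.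
have hx i : x i = x i0.
  have : (x i - x i0) ^+ 4 = 0 by rewrite frob !w subrr.
  by move/eqP; rewrite expf_eq0 /= subr_eq0 => /eqP.
exists (x i0); split.
  by case: nz => j; rewrite hx.
by move=> i; rewrite /pt1111 mulr1 hx.
Qed.

Lemma size_fpol x : (size (fpol a2 a3 a4 x) <= 4)%N.
Proof.
rewrite /fpol; apply: leq_trans (size_add _ _) _; rewrite geq_max; apply/andP; split;
  last by apply: leq_trans (size_polyC_leq1 _) _.
apply: leq_trans (size_add _ _) _; rewrite geq_max; apply/andP; split;
  last by apply: leq_trans (size_scale_leq _ _) _; rewrite size_polyX.
apply: leq_trans (size_add _ _) _; rewrite geq_max; apply/andP; split;
  by apply: leq_trans (size_scale_leq _ _) _; rewrite size_polyXn.
Qed.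

Lemma partIIIb : X_normal a1 a2 a3 a4 b -> forall x, Sg x ->
  ~ (forall i j : 'I_4, i != j -> x i != x j).
Proof.
move=> N x Sx dist.
case: (eqVneq (fpol a2 a3 a4 x) 0) => hf.
  case: (partIIIa N x Sx hf) => [[_ [c [_ hc]]] | [[_ [s [c [_ hc]]]] | [_ [_ [i [j [ij [xi xj]]]]]]]].
  - by move: (dist i0 i1 isT); rewrite !hc /pt1111 eqxx.
  - have : (s^-1 i0 != s^-1 i1)%g by rewrite (inj_eq perm_inj).
    by move/dist; rewrite !hc !permKV /pt0011 /= !mulr0 eqxx.
  - by move: (dist i j ij); rewrite xi xj eqxx.
have rt i : root (fpol a2 a3 a4 x) (x i).
  by case: Sx => _ [_ Fz]; rewrite /root -part0 Fz mulr0.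
have U : uniq [:: x i0; x i1; x i2; x i3].
  by rewrite /= !inE !negb_or !dist.
have := max_poly_roots hf _ U; rewrite /= !rt => /(_ isT) h.
by move: (leq_trans h (size_fpol x)).
Qed.

Lemma addKK2 (u : K) : u + u = 0.
Proof. by rewrite -mulr2n -mulr_natr two0 mulr0. Qed.
Lemma add0_eq (u v : K) : u + v = 0 -> u = v.
Proof. by move=> h; apply/eqP; rewrite -subr_eq0 oppK2 h. Qed.

Lemma IVb_eq x i : x i0 = 0 -> x i1 = 0 -> (i = i2 \/ i = i3) ->
  Fi a1 a2 a3 a4 b i x = c1 a2 a3 x + sv 1 x * x i * ((a2 + a3) * sv 1 x + a3 * x i).
Proof.
by move=> h0 h1 [->|->]; rewrite FiE ?d4E2 ?d4E3 h0 /c1; ring.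
Qed.

Lemma IVa x : Sg x -> x i0 = 0 -> x i1 = 0 -> c1 a2 a3 x = 0.
Proof.
move=> [_ [_ Fz]] h0 h1; rewrite -(Fz i0) FiE d4E0 h0 h1 /c1; ring.
Qed.

Lemma IVc x : Sg x -> x i0 = 0 -> x i1 = 0 ->
      (x i2 = x i3 /\ x i2 != 0) \/
      ((x i2 = 0 \/ x i3 = 0) /\ a2 = 0 /\ a1 = 0) \/
      (x i2 != 0 /\ x i3 != 0 /\ sv 1 x != 0 /\ a2 = 0 /\ a3 = 0 /\
       a1 * (x i2 + x i3) ^+ 4 + b * (x i2 * x i3) ^+ 2 = 0).
Proof.
move=> Sx h0 h1; have hc := IVa x Sx h0 h1.
case: Sx => nz [F0 Fz].
have F2 := Fz i2; rewrite (IVb_eq x i2 h0 h1 (or_introl erefl)) hc add0r in F2.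
have F3 := Fz i3; rewrite (IVb_eq x i3 h0 h1 (or_intror erefl)) hc add0r in F3.
have s1 : sv 1 x = x i2 + x i3 by rewrite sv1E h0 h1; ring.
have s2 : sv 2 x = x i2 * x i3 by rewrite sv2E h0 h1; ring.
have s3 : sv 3 x = 0 by rewrite sv3E h0 h1; ring.
have s4 : sv 4 x = 0 by rewrite sv4E h0 h1; ring.
move: hc F0; rewrite /c1 FqE s1 s2 s3 s4 => hc F0.
rewrite s1 in F2 F3.
set u := x i2 in hc F0 F2 F3 s1 *; set v := x i3 in hc F0 F2 F3 s1 *.
case: (eqVneq (u + v) 0) => hs.
  left; have e := add0_eq _ _ hs; split=> //.
  apply/eqP => u0; have v0 : v = 0 by rewrite -e.
  have z2 : x i2 = 0 := u0; have z3 : x i3 = 0 := v0.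
  by case: nz => i; dcase i; rewrite ?h0 ?h1 ?z2 ?z3 eqxx.
right.
case: (eqVneq u 0) => hu.
  left; split; first by left.
  rewrite hu add0r in hs hc F0.
  split.
    have : a2 * v ^+ 3 = 0 by rewrite -hc; ring.
    by move/eqP; rewrite mulf_eq0 expf_eq0 (negbTE hs) andbF orbF => /eqP.
  have : a1 * v ^+ 4 = 0 by rewrite -F0; ring.
  by move/eqP; rewrite mulf_eq0 expf_eq0 (negbTE hs) andbF orbF => /eqP.
case: (eqVneq v 0) => hv.
  left; split; first by right.
  rewrite hv addr0 in hs hc F0.
  split.
    have : a2 * u ^+ 3 = 0 by rewrite -hc; ring.
    by move/eqP; rewrite mulf_eq0 expf_eq0 (negbTE hs) andbF orbF => /eqP.
  have : a1 * u ^+ 4 = 0 by rewrite -F0; ring.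
  by move/eqP; rewrite mulf_eq0 expf_eq0 (negbTE hs) andbF orbF => /eqP.
right; do 3 split => //.
have G2 : (a2 + a3) * (u + v) + a3 * u = 0.
  by move/eqP: F2; rewrite !mulf_eq0 (negbTE hs) (negbTE hu) /= => /eqP.
have G3 : (a2 + a3) * (u + v) + a3 * v = 0.
  by move/eqP: F3; rewrite !mulf_eq0 (negbTE hs) (negbTE hv) /= => /eqP.
have ha3 : a3 = 0.
  have : a3 * (u - v) = 0 by rewrite -[RHS](subrr 0) -{1}G2 -G3; ring.
  move/eqP; rewrite mulf_eq0 subr_eq0 => /orP [/eqP //|/eqP uv].
  by move: hs; rewrite uv addKK2 eqxx.
have ha2 : a2 = 0.
  move: G2; rewrite ha3 addr0 mul0r addr0 => /eqP.
  by rewrite mulf_eq0 (negbTE hs) orbF => /eqP.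
do 2 split => //.
by rewrite -F0 ha2 ha3; ring.
Qed.

Lemma main :
  let Sg := sing_pt a1 a2 a3 a4 b in
  let f := fpol a2 a3 a4 in
  (forall (x : 'I_4 -> K) (i : 'I_4),
      x i * Fi a1 a2 a3 a4 b i x = (f x).[x i]) /\
  (a3 = 0 -> a4 = 0 ->
     (forall x : 'I_4 -> K, (exists i, x i != 0) ->
        sv 1 x = 0 -> sv 2 x = 0 -> Sg x) /\
     ~ sing_finite a1 a2 a3 a4 b) /\
  (X_normal a1 a2 a3 a4 b ->
     forall x : 'I_4 -> K, Sg x -> (exists i, x i = 0) -> sv 1 x = 0 ->
       two_zero x) /\
  (X_normal a1 a2 a3 a4 b ->
     (forall x : 'I_4 -> K, Sg x -> f x = 0 ->
        (a4 = 0 /\ proj_eq x (pt1111 K)) \/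
        (b = 0 /\ in_orbit_0011 x) \/
        (a2 = 0 /\ a3 = 0 /\ two_zero x)) /\
     (forall x : 'I_4 -> K, Sg x ->
        ~ (forall i j : 'I_4, i != j -> x i != x j))) /\
  (let i0 := @Ordinal 4 0 isT in let i1 := @Ordinal 4 1 isT in
   let i2 := @Ordinal 4 2 isT in let i3 := @Ordinal 4 3 isT in
   (forall x : 'I_4 -> K, Sg x -> x i0 = 0 -> x i1 = 0 ->
      c1 a2 a3 x = 0) /\
   (forall x : 'I_4 -> K, x i0 = 0 -> x i1 = 0 -> c1 a2 a3 x = 0 ->
      forall i, (i = i2 \/ i = i3) ->
      (Fi a1 a2 a3 a4 b i x = 0 <->
       sv 1 x * x i * ((a2 + a3) * sv 1 x + a3 * x i) = 0)) /\
   (forall x : 'I_4 -> K, Sg x -> x i0 = 0 -> x i1 = 0 ->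
      (x i2 = x i3 /\ x i2 != 0) \/
      ((x i2 = 0 \/ x i3 = 0) /\ a2 = 0 /\ a1 = 0) \/
      (x i2 != 0 /\ x i3 != 0 /\ sv 1 x != 0 /\ a2 = 0 /\ a3 = 0 /\
       a1 * (x i2 + x i3) ^+ 4 + b * (x i2 * x i3) ^+ 2 = 0))).
Proof.
move=> Sg f.
split; first exact: part0.
split; first by move=> h3 h4; split; [exact: partI1 | exact: partI2].
split; first exact: partII.
split; first by move=> N; split; [exact: partIIIa | exact: partIIIb].
move=> i0' i1' i2' i3'; rewrite {}/i0' {}/i1' {}/i2' {}/i3'.
split; first exact: IVa.
split; last exact: IVc.
by move=> x h0 h1 hc i hi; rewrite (IVb_eq x i h0 h1 hi) hc add0r.
Qed.
End S.

Theorem lemma4p3 (K : closedFieldType) (hK : (2 \in [pchar K])%N)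
    (a1 a2 a3 a4 b : K) :
  let Sg := sing_pt a1 a2 a3 a4 b in
  let f := fpol a2 a3 a4 in
  (* x_i F_i(x) = f(x_i) *)
  (forall (x : 'I_4 -> K) (i : 'I_4),
      x i * Fi a1 a2 a3 a4 b i x = (f x).[x i]) /\
  (* (I) *)
  (a3 = 0 -> a4 = 0 ->
     (forall x : 'I_4 -> K, (exists i, x i != 0) ->
        sv 1 x = 0 -> sv 2 x = 0 -> Sg x) /\
     ~ sing_finite a1 a2 a3 a4 b) /\
  (* (II) *)
  (X_normal a1 a2 a3 a4 b ->
     forall x : 'I_4 -> K, Sg x -> (exists i, x i = 0) -> sv 1 x = 0 ->
       two_zero x) /\
  (* (III) *)
  (X_normal a1 a2 a3 a4 b ->
     (forall x : 'I_4 -> K, Sg x -> f x = 0 ->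
        (a4 = 0 /\ proj_eq x (pt1111 K)) \/
        (b = 0 /\ in_orbit_0011 x) \/
        (a2 = 0 /\ a3 = 0 /\ two_zero x)) /\
     (forall x : 'I_4 -> K, Sg x ->
        ~ (forall i j : 'I_4, i != j -> x i != x j))) /\
  (* (IV) *)
  (let i0 := @Ordinal 4 0 isT in let i1 := @Ordinal 4 1 isT in
   let i2 := @Ordinal 4 2 isT in let i3 := @Ordinal 4 3 isT in
   (forall x : 'I_4 -> K, Sg x -> x i0 = 0 -> x i1 = 0 ->
      c1 a2 a3 x = 0) /\
   (forall x : 'I_4 -> K, x i0 = 0 -> x i1 = 0 -> c1 a2 a3 x = 0 ->
      forall i, (i = i2 \/ i = i3) ->
      (Fi a1 a2 a3 a4 b i x = 0 <->
       sv 1 x * x i * ((a2 + a3) * sv 1 x + a3 * x i) = 0)) /\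
   (forall x : 'I_4 -> K, Sg x -> x i0 = 0 -> x i1 = 0 ->
      (x i2 = x i3 /\ x i2 != 0) \/
      ((x i2 = 0 \/ x i3 = 0) /\ a2 = 0 /\ a1 = 0) \/
      (x i2 != 0 /\ x i3 != 0 /\ sv 1 x != 0 /\ a2 = 0 /\ a3 = 0 /\
       a1 * (x i2 + x i3) ^+ 4 + b * (x i2 * x i3) ^+ 2 = 0))).
Proof. exact: (@main K hK a1 a2 a3 a4 b). Qed.
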